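(* The pruning map $UT^1(\Sigma)\to T^1(\Sigma)$, $X\mapsto\overline{X}$, is a surjective $(2,1,1,0)$-morphism from $UT^1(\Sigma)$ with unpruned multiplication $\times$, unpruned $( * )$, unpruned $(+)$ and the trivial tree as distinguished identity, to $T^1(\Sigma)$ with pruned multiplication, $*$, $+$ and the trivial tree as distinguished identity. In particular, for all $X,Y\in UT^1(\Sigma)$: $\overline{X\times Y}=\overline{X}\,\overline{Y}$, $\overline{X^{(+)}}=\overline{X}^+$ and $\overline{X^{( * )}}=\overline{X}^*$.
   Context: Let $\Sigma$ be a set. A $\Sigma$-tree is a finite directed graph whose underlying undirected graph is a tree, edges labelled by elements of $\Sigma$, with distinguished start and end vertices such that there is a (possibly empty) directed path from the start vertex to the end vertex. A tree with one vertex is trivial. A morphism $X\to Y$ maps vertices to vertices and edges to edges, preserving initial vertex, terminal vertex and label of each edge, and maps start/end vertex of $X$ to start/end vertex of $Y$; an isomorphism is a morphism bijective on vertices and edges. A retraction is an idempotent morphism $X\to X$, its image (a subtree with the same start and end vertices) being a retract; $X$ is pruned if it has no non-identity retraction. Every tree $X$ has a pruned retract, unique up to isomorphism; its isomorphism type is $\overline{X}$. $UT^1(\Sigma)$ is the set of isomorphism types of $\Sigma$-trees and $T^1(\Sigma)$ that of pruned $\Sigma$-trees. Unpruned operations on $UT^1(\Sigma)$: $X\times Y$ is obtained from disjoint copies of $X$ and $Y$ by identifying the end vertex of $X$ with the start vertex of $Y$, taking start vertex that of $X$ and end vertex that of $Y$; $X^{(+)}$ has the same graph and start vertex as $X$ but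 end vertex equal to its start vertex; $X^{( * )}$ has the same graph and end vertex as $X$ but start vertex equal to its end vertex. Pruned operations on $T^1(\Sigma)$: $XY=\overline{X\times Y}$, $X^+=\overline{X^{(+)}}$, $X^*=\overline{X^{( * )}}$. *)

(* Defs.v *)
From HB Require Import structures.
From mathcomp Require Import all_boot.
Unset Printing Implicit Defensive.

Record sgraph (S : Type) := SGraph {
  gV : finType;
  gE : finType;
  gsrc : gE -> gV;
  gtgt : gE -> gV;
  glab : gE -> S;
  gstart : gV;
  gend : gV }.
Arguments SGraph {S} gV gE gsrc gtgt glab gstart gend.
Arguments gV {S}. Arguments gE {S}.
Arguments gsrc {S s}. Arguments gtgt {S s}. Arguments glab {S s}.
Arguments gstart {S}. Arguments gend {S}.

Definition uadj {S : Type} (G : sgraph S) : rel (gV G) := fun u v =>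
  [exists e, ((gsrc e == u) && (gtgt e == v)) || ((gsrc e == v) && (gtgt e == u))].
Definition diradj {S : Type} (G : sgraph S) : rel (gV G) := fun u v =>
  [exists e, (gsrc e == u) && (gtgt e == v)].

Definition tr_from {S : Type} (G : sgraph S) (x : gE G * bool) : gV G :=
  if x.2 then gsrc x.1 else gtgt x.1.
Definition tr_to {S : Type} (G : sgraph S) (x : gE G * bool) : gV G :=
  if x.2 then gtgt x.1 else gsrc x.1.

Definition ucycle {S : Type} (G : sgraph S) (x : gE G * bool) (s : seq (gE G * bool)) : bool :=
  [&& path (fun a b => tr_to G a == tr_from G b) x s,
      tr_to G (last x s) == tr_from G x
    & uniq (map fst (x :: s))].

Definition uacyclic {S : Type} (G : sgraph S) : Prop := forall x s, ~~ ucycle G x s.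
Definition uconnected {S : Type} (G : sgraph S) : Prop := forall u v, connect (uadj G) u v.

Definition is_tree {S : Type} (G : sgraph S) : Prop :=
  [/\ uconnected G, uacyclic G & connect (diradj G) (gstart G) (gend G)].

Definition is_hom {S : Type} (X Y : sgraph S) (fv : gV X -> gV Y) (fe : gE X -> gE Y) : Prop :=
  [/\ forall e, gsrc (fe e) = fv (gsrc e),
      forall e, gtgt (fe e) = fv (gtgt e),
      forall e, glab (fe e) = glab e,
      fv (gstart X) = gstart Y
    & fv (gend X) = gend Y].

Definition iso {S : Type} (X Y : sgraph S) : Prop :=
  exists fv fe, [/\ is_hom X Y fv fe, bijective fv & bijective fe].

Definition is_retraction {S : Type} (X : sgraph S) (rv : gV X -> gV X) (re : gE X -> gE X) : Prop :=
  [/\ is_hom X X rv re, rv \o rv =1 rv & re \o re =1 re].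

Definition pruned {S : Type} (X : sgraph S) : Prop :=
  forall rv re, is_retraction X rv re -> rv =1 id /\ re =1 id.

(* Y is (isomorphic to) a retract of X: Y embeds in X, by an injective
   morphism, exactly onto the image of a retraction of X. *)
Definition retract_of {S : Type} (Y X : sgraph S) : Prop :=
  exists rv re iv ie,
    [/\ is_retraction X rv re, is_hom Y X iv ie, injective iv /\ injective ie,
        (forall v, (exists y, iv y = v) <-> (exists w, rv w = v))
      & (forall e, (exists d, ie d = e) <-> (exists f, re f = e))].

(* P is a pruned retract of X (so P represents the class \overline{X}) *)
Definition pruned_retract {S : Type} (X P : sgraph S) : Prop := pruned P /\ retract_of P X.

Definition prodV {S : Type} (X Y : sgraph S) : finType :=
  (gV X + {y : gV Y | y != gstart Y})%type.
Definition inj2 {S : Type} (X Y : sgraph S) (y : gV Y) : prodV X Y :=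
  match insub y with Some y' => inr y' | None => inl (gend X) end.

Definition gprod {S : Type} (X Y : sgraph S) : sgraph S :=
  @SGraph S (prodV X Y) (gE X + gE Y)%type
    (fun e => match e with inl e => inl (gsrc e) | inr e => inj2 X Y (gsrc e) end)
    (fun e => match e with inl e => inl (gtgt e) | inr e => inj2 X Y (gtgt e) end)
    (fun e => match e with inl e => glab e | inr e => glab e end)
    (inl (gstart X)) (inj2 X Y (gend Y)).

Definition gplus {S : Type} (X : sgraph S) : sgraph S :=
  SGraph (gV X) (gE X) (@gsrc S X) (@gtgt S X) (@glab S X) (gstart X) (gstart X).
Definition gstar {S : Type} (X : sgraph S) : sgraph S :=
  SGraph (gV X) (gE X) (@gsrc S X) (@gtgt S X) (@glab S X) (gend X) (gend X).

Definition gtriv (S : Type) : sgraph S :=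
  @SGraph S unit void (fun e => match e with end) (fun e => match e with end)
    (fun e => match e with end) tt tt.

(* Main.v *)
Require Import Defs.
From mathcomp Require Import all_boot.
From mathcomp Require Import zify.

Set Implicit Arguments.
Section Aux.
Context {S : Type}.

Lemma hom_comp (X Y Z : sgraph S) f fe g ge :
  is_hom X Y f fe -> is_hom Y Z g ge -> is_hom X Z (g \o f) (ge \o fe).
Proof.
case=> h1 h2 h3 h4 h5 [k1 k2 k3 k4 k5]; split=> [e|e|e||] /=.
- by rewrite k1 h1.
- by rewrite k2 h2.
- by rewrite k3 h3.
- by rewrite h4 k4.
- by rewrite h5 k5.
Qed.

Lemma hom_id (X : sgraph S) : is_hom X X id id.
Proof. by split. Qed.

Lemma retract_homs (Y X : sgraph S) : retract_of Y X ->
  (exists iv ie, is_hom Y X iv ie) /\ (exists pv pe, is_hom X Y pv pe).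
Proof.
case=> rv [re [iv [ie [[[r1 r2 r3 r4 r5] _ _] Hi [inj_iv inj_ie] HV HE]]]].
split; first by exists iv, ie.
have exv : forall v, exists y, iv y == rv v by move=> v; case: (proj2 (HV (rv v))) => [|y /eqP]; [by exists v|exists y].
have exe : forall v, exists y, ie y == re v by move=> v; case: (proj2 (HE (re v))) => [|y /eqP]; [by exists v|exists y].
pose pv v := xchoose (exv v).
pose pe e := xchoose (exe e).
have pvE v : iv (pv v) = rv v by apply/eqP/(xchooseP (exv v)).
have peE e : ie (pe e) = re e by apply/eqP/(xchooseP (exe e)).
case: Hi => i1 i2 i3 i4 i5.
exists pv, pe; split.
- move=> e; apply: inj_iv; by rewrite -i1 peE r1 pvE.
- move=> e; apply: inj_iv; by rewrite -i2 peE r2 pvE.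
- by move=> e; rewrite -i3 peE r3.
- by apply: inj_iv; rewrite pvE r4 i4.
- by apply: inj_iv; rewrite pvE r5 i5.
Qed.

Lemma arith1 n k d a : a <= n -> n + k.+1 * d = (n + k * d - a) + (d + a).
Proof. move=> *; lia. Qed.
Lemma arith2 n k d a : a <= n -> a <= n + k * d.
Proof. move=> *; lia. Qed.
Lemma arith3 d a : 0 < d -> a <= d * a.+1.
Proof. move=> *; nia. Qed.

Lemma hom_iter (X : sgraph S) f fe n : is_hom X X f fe -> is_hom X X (iter n f) (iter n fe).
Proof.
move=> H; elim: n => [|n IH]; first exact: hom_id.
case: (hom_comp IH H) => h1 h2 h3 h4 h5; split => [e|e|e||];
  rewrite ?iterS; [exact: h1|exact: h2|exact: h3|exact: h4|exact: h5].
Qed.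

Lemma pruned_endo (P : sgraph S) f fe : pruned P -> is_hom P P f fe ->
  bijective f /\ bijective fe.
Proof.
move=> pr hf.
pose F (k : nat) := ([ffun v => iter k f v], [ffun e => iter k fe e]).
have : ~~ injectiveb (fun i : 'I_(#|{: {ffun gV P -> gV P} * {ffun gE P -> gE P}}|.+1) => F i).
  apply/negP => /injectiveP Hinj; move: (leq_card _ Hinj); by rewrite card_ord ltnn.
case/injectivePn => i [j Hij EF].
have gen : forall a b, a < b -> F a = F b -> exists a d, 0 < d /\
   (forall v, iter (d + a) f v = iter a f v) /\ (forall e, iter (d + a) fe e = iter a fe e).
  move=> a b ab Eab; exists a, (b - a); split; first by rewrite subn_gt0.
  have E1 := congr1 fst Eab; have E2 := congr1 snd Eab.
  rewrite /F in E1 E2; simpl fst in E1; simpl snd in E2.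
  move/ffunP: E1 => E1; move/ffunP: E2 => E2.
  rewrite (subnK (ltnW ab)); split => x.
  + by move: (E1 x); rewrite !ffunE => ->.
  + by move: (E2 x); rewrite !ffunE => ->.
have [a [d [d0 [Hv He]]]] : exists a d, 0 < d /\
   (forall v, iter (d + a) f v = iter a f v) /\ (forall e, iter (d + a) fe e = iter a fe e).
  case: (ltngtP i j) => [lt|gt|eq]; [exact: gen lt EF | exact: gen gt (esym EF) |].
  by move/ord_inj: eq Hij => ->; rewrite eqxx.
have per : forall (T : Type) (g : T -> T), (forall x, iter (d + a) g x = iter a g x) ->
    forall k n x, a <= n -> iter (n + k * d) g x = iter n g x.
  move=> T g Hg; elim=> [|k IH] n x an; first by rewrite mul0n addn0.
  rewrite (@arith1 n k d a an) iterD Hg -iterD subnK; [exact: IH | exact: arith2].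
pose m := d * a.+1.
have am : a <= m by exact: arith3.
have m0 : 0 < m by rewrite /m muln_gt0 d0.
have idem : forall (T : Type) (g : T -> T), (forall x, iter (d + a) g x = iter a g x) ->
    forall x, iter m g (iter m g x) = iter m g x.
  move=> T g Hg x; rewrite -iterD.
  have -> : m + m = m + a.+1 * d by rewrite /m mulnC.
  exact: per.
have hr : is_retraction P (iter m f) (iter m fe).
  split; [exact: hom_iter | move=> x /=; exact: idem | move=> x /=; exact: idem].
case: (pr _ _ hr) => Iv Ie.
split.
- exists (iter m.-1 f) => x.
  + by rewrite -iterSr prednK // Iv.
  + by rewrite -iterS prednK // Iv.
- exists (iter m.-1 fe) => x.
  + by rewrite -iterSr prednK // Ie.
  + by rewrite -iterS prednK // Ie.
Qed.

Lemma bij_of (A B : Type) (f : A -> B) (g : B -> A) :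
  bijective (g \o f) -> bijective (f \o g) -> bijective f.
Proof.
move=> [h1 h1K h1K'] [h2 h2K h2K'].
have injf : injective f.
  move=> x y E; by rewrite -[x]h1K -[y]h1K /= E.
exists (g \o h2) => [x|y] /=.
- apply: injf; exact: (h2K' (f x)).
- exact: h2K'.
Qed.

Lemma iso_homs (P Q : sgraph S) f fe g ge : pruned P -> pruned Q ->
  is_hom P Q f fe -> is_hom Q P g ge -> iso P Q.
Proof.
move=> pP pQ hf hg.
case: (pruned_endo pP (hom_comp hf hg)) => bv be.
case: (pruned_endo pQ (hom_comp hg hf)) => bv' be'.
exists f, fe; split => //; [exact: (bij_of bv bv') | exact: (bij_of be be')].
Qed.

Definition pmap (X Y X' Y' : sgraph S) (f : gV X -> gV X') (g : gV Y -> gV Y') :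
  gV (gprod X Y) -> gV (gprod X' Y') :=
  fun v => match v with inl x => inl (f x) | inr y => inj2 X' Y' (g (val y)) end.

Definition emap (X Y X' Y' : sgraph S) (f : gE X -> gE X') (g : gE Y -> gE Y') :
  gE (gprod X Y) -> gE (gprod X' Y') :=
  fun v => match v with inl x => inl (f x) | inr y => inr (g y) end.

Arguments pmap {X Y X' Y'} f g.
Arguments emap {X Y X' Y'} f g.

Lemma pmap_inj2 (X Y X' Y' : sgraph S) f fe g ge :
  is_hom X X' f fe -> is_hom Y Y' g ge ->
  forall y, pmap f g (inj2 X Y y) = inj2 X' Y' (g y).
Proof.
move=> [_ _ _ _ h5] [_ _ _ k4 _] y; rewrite /inj2; case: insubP => [u Hu Hval|Hn] /=.
- by rewrite Hval.
- by move/negPn/eqP: Hn => ->; rewrite k4 insubF ?eqxx //= h5.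
Qed.

Lemma hom_prod (X Y X' Y' : sgraph S) f fe g ge :
  is_hom X X' f fe -> is_hom Y Y' g ge ->
  is_hom (gprod X Y) (gprod X' Y') (pmap f g) (emap fe ge).
Proof.
move=> hf hg; move: (pmap_inj2 hf hg) => PI.
case: hf => h1 h2 h3 h4 h5; case: hg => k1 k2 k3 k4 k5.
split.
- by case=> e /=; rewrite ?h1 ?PI ?k1.
- by case=> e /=; rewrite ?h2 ?PI ?k2.
- by case=> e /=; rewrite ?h3 ?k3.
- by rewrite /= h4.
- by rewrite /= PI k5.
Qed.

Lemma hom_plus (X Y : sgraph S) f fe : is_hom X Y f fe -> is_hom (gplus X) (gplus Y) f fe.
Proof. by case=> h1 h2 h3 h4 h5; split. Qed.

Lemma hom_star (X Y : sgraph S) f fe : is_hom X Y f fe -> is_hom (gstar X) (gstar Y) f fe.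
Proof. by case=> h1 h2 h3 h4 h5; split. Qed.

End Aux.

Theorem theorem4p5 (S : Type) :
  [/\ (* surjective onto pruned trees *)
      (forall P : sgraph S, is_tree P -> pruned P ->
         exists X : sgraph S, is_tree X /\ pruned_retract X P),
      (* \overline{X x Y} = \overline{X} \overline{Y} *)
      (forall X Y : sgraph S, is_tree X -> is_tree Y ->
         forall PX PY P Q : sgraph S,
           pruned_retract X PX -> pruned_retract Y PY ->
           pruned_retract (gprod PX PY) P ->
           pruned_retract (gprod X Y) Q -> iso Q P),
      (* \overline{X^{(+)}} = \overline{X}^+ *)
      (forall X : sgraph S, is_tree X ->
         forall PX P Q : sgraph S,
           pruned_retract X PX -> pruned_retract (gplus PX) P ->
           pruned_retract (gplus X) Q -> iso Q P),
      (* \overline{X^{( * )}} = \overline{X}^* *)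
      (forall X : sgraph S, is_tree X ->
         forall PX P Q : sgraph S,
           pruned_retract X PX -> pruned_retract (gstar PX) P ->
           pruned_retract (gstar X) Q -> iso Q P)
    & (* identity preserved *)
      (forall Q : sgraph S, pruned_retract (gtriv S) Q -> iso Q (gtriv S))].
Proof.
split.
- move=> P tP pP; exists P; split => //; split => //.
  exists (@id (gV P)), (@id (gE P)), id, id; split.
  + by split => //; exact: hom_id.
  + exact: hom_id.
  + by split.
  + by move=> v; split; case=> w <-; exists w.
  + by move=> v; split; case=> w <-; exists w.
- move=> X Y _ _ PX PY P Q [_ rX] [_ rY] [pP rP] [pQ rQ].
  case: (retract_homs rX) => [[iX [ieX hiX]] [pX [peX hpX]]].
  case: (retract_homs rY) => [[iY [ieY hiY]] [pY [peY hpY]]].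
  case: (retract_homs rP) => [[iP [ieP hiP]] [pP' [peP hpP]]].
  case: (retract_homs rQ) => [[iQ [ieQ hiQ]] [pQ' [peQ hpQ]]].
  exact: (iso_homs pQ pP (hom_comp (hom_comp hiQ (hom_prod hpX hpY)) hpP)
                         (hom_comp (hom_comp hiP (hom_prod hiX hiY)) hpQ)).
- move=> X _ PX P Q [_ rX] [pP rP] [pQ rQ].
  case: (retract_homs rX) => [[iX [ieX hiX]] [pX [peX hpX]]].
  case: (retract_homs rP) => [[iP [ieP hiP]] [pP' [peP hpP]]].
  case: (retract_homs rQ) => [[iQ [ieQ hiQ]] [pQ' [peQ hpQ]]].
  exact: (iso_homs pQ pP (hom_comp (hom_comp hiQ (hom_plus hpX)) hpP)
                         (hom_comp (hom_comp hiP (hom_plus hiX)) hpQ)).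
- move=> X _ PX P Q [_ rX] [pP rP] [pQ rQ].
  case: (retract_homs rX) => [[iX [ieX hiX]] [pX [peX hpX]]].
  case: (retract_homs rP) => [[iP [ieP hiP]] [pP' [peP hpP]]].
  case: (retract_homs rQ) => [[iQ [ieQ hiQ]] [pQ' [peQ hpQ]]].
  exact: (iso_homs pQ pP (hom_comp (hom_comp hiQ (hom_star hpX)) hpP)
                         (hom_comp (hom_comp hiP (hom_star hiX)) hpQ)).
- move=> Q [pQ [rv [re [iv [ie [_ Hi [inj_iv _] _ _]]]]]].
  exists (fun _ => tt : gV (gtriv S)), ie; split.
  + split => //=; move=> e; case: (ie e).
  + exists (fun _ => gstart Q) => [v|[]] //=.
    apply: inj_iv; by case: (iv (gstart Q)); case: (iv v).
  + exists (fun x : gE (gtriv S) => match x with end) => [e|[]].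
    by case: (ie e).
Qed.
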